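(* Let $\Phi$ be an $N\times\mathcal{C}$ complex matrix ($\mathcal{C}\ge 2$) with no repeated columns which is $\eta$-StRIP-able for some $\eta\in(0,1]$, with columns $\varphi_1,\dots,\varphi_{\mathcal{C}}$. Let $1\le k\le\mathcal{C}$ and fix complex numbers $\alpha_1,\dots,\alpha_k$. Let $\pi=(\pi_1,\dots,\pi_{\mathcal{C}})$ be a uniformly random permutation of $\{1,\dots,\mathcal{C}\}$, let $\alpha\in\mathbb{C}^{\mathcal{C}}$ be the vector with entry $\alpha_j$ at position $\pi_j$ for $j=1,\dots,k$ and zero elsewhere, and let $f:=N^{-1/2}\Phi\alpha=N^{-1/2}\sum_{j=1}^k\alpha_j\varphi_{\pi_j}$. Then $$\left(1-\frac{k-1}{\mathcal{C}-1}\right)\|\alpha\|^2\leq\mathbb{E}_\pi\left[\|f\|^2\right]\leq\left(1+\frac{1}{\mathcal{C}-1}\right)\|\alpha\|^2,$$ where $\mathbb{E}_\pi$ denotes expectation over $\pi$ only.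
   Context: Columns of $\Phi$ have entries $\varphi_j(x)$, $x=1,\dots,N$. For $0<\eta\le 1$, $\Phi$ is called $\eta$-StRIP-able if: (St1) $\sum_{j=1}^{\mathcal{C}}\varphi_j(x)\overline{\varphi_j(y)}=0$ for $x\neq y$, and $\sum_{j=1}^{\mathcal{C}}\varphi_j(x)=0$ for all $x$; (St2) the columns form a group under pointwise multiplication, whose identity is the all-ones column $\varphi_1$; (St3) for all $j\in\{2,\dots,\mathcal{C}\}$, $\left|\sum_x\varphi_j(x)\right|^2\leq N^{2-\eta}$. $\|\cdot\|$ is the Euclidean norm. *)

(* Defs.v *)
From HB Require Import structures.
From mathcomp Require Import all_boot all_order all_algebra all_fingroup.
From mathcomp Require Import complex.
From mathcomp Require Import reals exp.
Set Implicit Arguments. Unset Strict Implicit. Unset Printing Implicit Defensive.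
Import Order.TTheory GRing.Theory Num.Theory.
Local Open Scope ring_scope.
Local Open Scope complex_scope.

Definition cmod2 (R : realType) (z : R[i]) : R := let: a +i* b := z in a ^+ 2 + b ^+ 2.

Definition vnorm2 (R : realType) n (v : 'cV[R[i]]_n) : R :=
  \sum_(i < n) cmod2 (v i ord0).

Definition cconj (R : realType) (z : R[i]) : R[i] := let: a +i* b := z in a -i* b.

(* eta-StRIP-able; columns are indexed by 'I_Cc and the index of the
   identity column phi_1 is the designated index [one]. *)
Definition StRIPable (R : realType) (N Cc : nat) (eta : R)
    (Phi : 'M[R[i]]_(N, Cc)) (one : 'I_Cc) : Prop :=
  (forall x y : 'I_N, x != y ->
      \sum_(j < Cc) Phi x j * cconj (Phi y j) = 0) /\
  (forall x : 'I_N, \sum_(j < Cc) Phi x j = 0) /\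
  (* (St2): columns form a group under pointwise multiplication,
     with identity the all-ones column phi_1 *)
  (forall x : 'I_N, Phi x one = 1) /\
  (forall i j : 'I_Cc, exists l : 'I_Cc, forall x : 'I_N,
      Phi x l = Phi x i * Phi x j) /\
  (forall i : 'I_Cc, exists l : 'I_Cc, forall x : 'I_N,
      Phi x i * Phi x l = 1) /\
  (forall j : 'I_Cc, j != one ->
      cmod2 (\sum_(x < N) Phi x j) <= (N%:R : R) `^ (2 - eta)).

Definition alpha_of (R : realType) (Cc k : nat) (hk : (k <= Cc)%N)
    (a : 'I_k -> R[i]) (pi : 'S_Cc) : 'cV[R[i]]_Cc :=
  \col_(i < Cc) \sum_(j < k | pi (widen_ord hk j) == i) a j.

Definition f_of (R : realType) (N Cc : nat) (Phi : 'M[R[i]]_(N, Cc))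
    (alpha : 'cV[R[i]]_Cc) : 'cV[R[i]]_N :=
  ((Num.sqrt (N%:R : R))^-1)%:C *: (Phi *m alpha).

Definition Eperm (R : realType) (Cc : nat) (F : 'S_Cc -> R) : R :=
  (#|[set: 'S_Cc]|%:R)^-1 * \sum_(pi : 'S_Cc) F pi.

(* Main.v *)
Require Import Defs.
From HB Require Import structures.
From mathcomp Require Import all_boot all_order all_algebra all_fingroup.
From mathcomp Require Import complex.
From mathcomp Require Import reals exp.
From mathcomp Require Import ring lra.
Import Order.TTheory GRing.Theory Num.Theory.
Local Open Scope ring_scope.
Local Open Scope complex_scope.


Lemma cconjE {R : realType} (z : R[i]) : cconj z = z^*. Proof. by case: z. Qed.

Lemma cmod2E {R : realType} (z : R[i]) : (cmod2 z)%:C = z * z^*.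
Proof. case: z => a b /=; apply/eqP; rewrite eq_complex /=; apply/andP; split; apply/eqP; ring. Qed.

Lemma cmod2_ge0 {R : realType} (z : R[i]) : 0 <= cmod2 z.
Proof. case: z => a b /=; by rewrite addr_ge0 // sqr_ge0. Qed.

Lemma cmod2M {R : realType} (y z : R[i]) : cmod2 (y * z) = cmod2 y * cmod2 z.
Proof. apply: complexI; rewrite rmorphM /= !cmod2E rmorphM /=; ring. Qed.

Lemma cmod21 {R : realType} : cmod2 (1 : R[i]) = 1.
Proof. by rewrite /= expr0n /= addr0 expr1n. Qed.

Lemma cmod2C {R : realType} (c : R) : cmod2 c%:C = c ^+ 2.
Proof. by rewrite /= expr0n /= addr0. Qed.

Lemma CS {R : realType} (k : nat) (r : 'I_k -> R) : (\sum_j r j) ^+ 2 <= k%:R * \sum_j r j ^+ 2.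
Proof.
case: k r => [|k] r; first by rewrite !big_ord0 expr0n /= mul0r.
set S := \sum_j r j; set Q := \sum_j r j ^+ 2.
set m := S / k.+1%:R.
have kp : 0 < k.+1%:R :> R by rewrite ltr0n.
have H : 0 <= \sum_(j < k.+1) (r j - m) ^+ 2 by apply: sumr_ge0 => j _; apply: sqr_ge0.
have E : \sum_(j < k.+1) (r j - m) ^+ 2 = Q + (- (m * 2) * S + m ^+ 2 * k.+1%:R).
  have sq j : (r j - m) ^+ 2 = r j ^+ 2 + (- (m * 2) * r j + m ^+ 2) by ring.
  under eq_bigr => j _ do rewrite sq.
  by rewrite big_split /= big_split /= -mulr_sumr sumr_const card_ord !mulr_natr.
rewrite E /m in H.
have H2 : 0 <= k.+1%:R * (Q + (- (S / k.+1%:R * 2) * S + (S / k.+1%:R) ^+ 2 * k.+1%:R)).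
  by rewrite mulr_ge0 // ltW.
have E2 : k.+1%:R * (Q + (- (S / k.+1%:R * 2) * S + (S / k.+1%:R) ^+ 2 * k.+1%:R)) = k.+1%:R * Q - S ^+ 2.
  by field; rewrite addrC natr1 pnatr_eq0.
rewrite E2 in H2.
by rewrite -subr_ge0.
Qed.

Lemma phi_unit {R : realType} N Cc (Phi : 'M[R[i]]_(N, Cc)) (one : 'I_Cc) (eta : R)
    (hinj : forall i j : 'I_Cc, col i Phi = col j Phi -> i = j)
    (hstrip : StRIPable eta Phi one) x i : Phi x i * (Phi x i)^* = 1.
Proof.
have [_ [_ [h1 [hmul [hinv _]]]]] := hstrip.
pose mf := fun j => odflt j [pick l | [forall y, Phi y l == Phi y i * Phi y j]].
have mfE j y : Phi y (mf j) = Phi y i * Phi y j.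
  rewrite /mf; case: pickP => [l /forallP /(_ y) /eqP //|H].
  have [l hl] := hmul i j.
  have := H l; rewrite (_ : [forall y, _] = true) //.
  by apply/forallP => y'; apply/eqP; exact: hl.
have nz y : Phi y i != 0.
  have [l hl] := hinv i; apply/eqP => e; have := hl y; rewrite e mul0r.
  by move/eqP; rewrite eq_sym oner_eq0.
have mf_inj : injective mf.
  move=> j1 j2 e; apply: hinj; apply/matrixP => y z; rewrite !mxE.
  by apply: (mulfI (nz y)); rewrite -!mfE e.
pose s := \sum_j cmod2 (Phi x j).
have es : s = cmod2 (Phi x i) * s.
  rewrite /s {1}(reindex_inj mf_inj) /= mulr_sumr; apply eq_bigr => j _.
  by rewrite mfE cmod2M.
have spos : 0 < s.
  rewrite /s (bigD1 one) //= h1 cmod21.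
  have : 0 <= \sum_(j | j != one) cmod2 (Phi x j) by apply: sumr_ge0 => j _; apply: cmod2_ge0.
  lra.
have c1 : cmod2 (Phi x i) = 1.
  apply: (mulIf (lt0r_neq0 spos)); by rewrite mul1r -es.
by rewrite -cmod2E c1.
Qed.

Lemma sum_delta {R : realType} k (j : 'I_k) (F : 'I_k -> R[i]) :
  \sum_(j' < k) (j == j')%:R * F j' = F j.
Proof.
rewrite (bigD1 j) //= eqxx mul1r big1 ?addr0 // => j' /negbTE.
by rewrite eq_sym => ->; rewrite mul0r.
Qed.

Lemma cmod2_ReIm {R : realType} (z : R[i]) : cmod2 z = complex.Re z ^+ 2 + complex.Im z ^+ 2.
Proof. by case: z. Qed.

Lemma Re_sum {R : realType} k (a : 'I_k -> R[i]) : complex.Re (\sum_j a j) = \sum_j complex.Re (a j).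
Proof. apply: (big_morph _ _ (erefl _)) => [[x1 x2] [y1 y2]] //. Qed.
Lemma Im_sum {R : realType} k (a : 'I_k -> R[i]) : complex.Im (\sum_j a j) = \sum_j complex.Im (a j).
Proof. apply: (big_morph _ _ (erefl _)) => [[x1 x2] [y1 y2]] //. Qed.

Lemma CSc {R : realType} k (a : 'I_k -> R[i]) : cmod2 (\sum_j a j) <= k%:R * \sum_j cmod2 (a j).
Proof.
rewrite cmod2_ReIm Re_sum Im_sum.
under [X in _ <= _ * X]eq_bigr => j _ do rewrite cmod2_ReIm.
rewrite big_split /= mulrDr.
by apply: lerD; apply: CS.
Qed.

Lemma swap4 (I1 I2 I3 I4 : finType) (R : realType) (F : I1 -> I2 -> I3 -> I4 -> R[i]) :
  \sum_a \sum_b \sum_c \sum_d F a b c d = \sum_c \sum_d \sum_a \sum_b F a b c d.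
Proof.
transitivity (\sum_a \sum_c \sum_b \sum_d F a b c d).
  by apply eq_bigr => a _; exact: exchange_big.
transitivity (\sum_a \sum_c \sum_d \sum_b F a b c d).
  by apply eq_bigr => a _; apply eq_bigr => c _; exact: exchange_big.
rewrite exchange_big; apply eq_bigr => c _; exact: exchange_big.
Qed.

Theorem lemma3p2 (R : realType) (N Cc : nat) (Phi : 'M[R[i]]_(N, Cc))
    (one : 'I_Cc) (eta : R) (k : nat) (a : 'I_k -> R[i])
    (hC : (2 <= Cc)%N)
    (hinj : forall i j : 'I_Cc, col i Phi = col j Phi -> i = j)
    (heta : 0 < eta <= 1)
    (hstrip : StRIPable eta Phi one)
    (hk1 : (1 <= k)%N) (hk : (k <= Cc)%N) :
  let En := Eperm (fun pi => vnorm2 (f_of Phi (alpha_of hk a pi))) in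
  let na := \sum_(j < k) cmod2 (a j) in
  (1 - (k%:R - 1) / (Cc%:R - 1)) * na <= En /\
  En <= (1 + 1 / (Cc%:R - 1)) * na.
Proof.
move=> En na.
have [hSt1 [hSt0 [h1 [hmul [hinv h3]]]]] := hstrip.
have hU := @phi_unit _ _ _ _ _ _ hinj hstrip.
have C0 : (0 < Cc)%N by apply: leq_trans hC.
have Npos : (0 < N)%N.
  rewrite lt0n; apply/eqP => N0.
  have := hinj (Ordinal C0) (Ordinal hC).
  have -> : col (Ordinal C0) Phi = col (Ordinal hC) Phi.
    by apply/matrixP => y z; exfalso; have := ltn_ord y; rewrite {2}N0.
  by move=> /(_ erefl) /(congr1 val).
pose w := widen_ord hk.
pose vf (pi : 'S_Cc) x := \sum_j a j * Phi x (pi (w j)).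
have L5 pi x : (Phi *m alpha_of hk a pi) x ord0 = vf pi x.
  rewrite mxE.
  under eq_bigr => i _ do rewrite /alpha_of mxE big_mkcond /= mulr_sumr.
  rewrite exchange_big /=; apply eq_bigr => j _.
  rewrite (bigD1 (pi (w j))) //= eqxx big1 ?addr0; first by rewrite mulrC.
  by move=> i ne; rewrite eq_sym (negbTE ne) mulr0.
have L6 pi : vnorm2 (f_of Phi (alpha_of hk a pi)) = N%:R^-1 * \sum_x cmod2 (vf pi x).
  rewrite /vnorm2 mulr_sumr; apply eq_bigr => x _.
  rewrite /f_of mxE L5 cmod2M cmod2C exprVn sqr_sqrtr //.
pose K : R := #|[set: 'S_Cc]|%:R * N%:R.
pose cC : R[i] := (Cc%:R - 1)^-1.
have eC : (Cc.-1%:R : R[i]) = Cc%:R - 1.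
  by rewrite -[in RHS](prednK C0) -natr1 addrK.
have nzC : (Cc%:R - 1 : R[i]) != 0.
  by rewrite -eC pnatr_eq0 -lt0n -ltnS prednK.
pose T u v := \sum_(pi : 'S_Cc) \sum_x Phi x (pi u) * (Phi x (pi v))^*.
have Tuu u : T u u = K%:C.
  rewrite /T /K.
  under eq_bigr => pi _ do under eq_bigr => x _ do rewrite hU.
  rewrite sumr_const sumr_const card_ord cardsT rmorphM /= !rmorph_nat.
  by rewrite mulrC mulr_natr.
have Tsum u : \sum_v T u v = 0.
  rewrite /T exchange_big /=; apply: big1 => pi _.
  rewrite exchange_big /=; apply: big1 => x _.
  rewrite -mulr_sumr -rmorph_sum.
  have re : \sum_v Phi x (pi v) = \sum_v Phi x v.
    by rewrite [RHS](reindex_inj (@perm_inj _ pi)).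
  by rewrite re hSt0 rmorph0 mulr0.
have Tsw u v v' : u != v -> u != v' -> T u v = T u v'.
  move=> uv uv'; rewrite /T (reindex_inj (mulgI (tperm v v'))) /=.
  apply eq_bigr => pi _; apply eq_bigr => x _.
  by rewrite !permM tpermL tpermD // eq_sym.
have Tf u v : T u v = K%:C * ((u == v)%:R * (1 + cC) - cC).
  case: eqP => [->|/eqP uv]; first by rewrite Tuu mul1r addrK mulr1.
  have := Tsum u; rewrite (bigD1 u) //= Tuu.
  rewrite (eq_bigr (fun _ => T u v)); last by move=> v' v'u; apply: Tsw; rewrite // eq_sym.
  rewrite sumr_const cardC1 card_ord -[T u v *+ _]mulr_natr eC => /eqP.
  rewrite addr_eq0 => /eqP e.
  apply: (mulIf nzC); rewrite e mul0r add0r /cC; field; exact: nzC.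
have weq j j' : (w j == w j') = (j == j').
  by apply/eqP/eqP => [/(congr1 val) /= /val_inj|->].
have HS : (\sum_(pi : 'S_Cc) \sum_x cmod2 (vf pi x))%:C =
    K%:C * ((1 + cC) * na%:C - cC * (cmod2 (\sum_j a j))%:C).
  transitivity (\sum_(pi : 'S_Cc) \sum_x (cmod2 (vf pi x))%:C).
    by rewrite rmorph_sum; apply eq_bigr => pi _; rewrite rmorph_sum.
  have e1 pi x : (cmod2 (vf pi x))%:C = \sum_j \sum_j' a j * (a j')^* *
       (Phi x (pi (w j)) * (Phi x (pi (w j')))^*).
    rewrite cmod2E /vf rmorph_sum mulr_suml; apply eq_bigr => j _.
    rewrite mulr_sumr; apply eq_bigr => j' _; rewrite rmorphM /=; ring.
  under eq_bigr => pi _ do under eq_bigr => x _ do rewrite e1.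
  rewrite swap4.
  have e2 j j' : \sum_(pi : 'S_Cc) \sum_x a j * (a j')^* *
       (Phi x (pi (w j)) * (Phi x (pi (w j')))^*) =
       K%:C * (1 + cC) * ((j == j')%:R * (a j * (a j')^*)) - K%:C * cC * (a j * (a j')^*).
    have -> : \sum_(pi : 'S_Cc) \sum_x a j * (a j')^* *
       (Phi x (pi (w j)) * (Phi x (pi (w j')))^*) = a j * (a j')^* * T (w j) (w j').
      by rewrite /T mulr_sumr; apply eq_bigr => pi _; rewrite mulr_sumr.
    rewrite Tf weq; ring.
  under eq_bigr => j _ do under eq_bigr => j' _ do rewrite e2.
  under eq_bigr => j _ do rewrite sumrB -!mulr_sumr sum_delta.
  rewrite sumrB -!mulr_sumr.
  have -> : \sum_j a j * \sum_j' (a j')^* = (cmod2 (\sum_j a j))%:C.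
    by rewrite cmod2E rmorph_sum mulr_suml.
  have -> : \sum_j a j * (a j)^* = na%:C.
    by rewrite /na rmorph_sum; apply eq_bigr => j _; rewrite -cmod2E.
  ring.
pose c : R := (Cc%:R - 1)^-1.
pose cm := cmod2 (\sum_j a j).
have cCe : cC = c%:C.
  by rewrite /cC /c fmorphV rmorphB rmorph1 rmorph_nat.
have HSr : \sum_(pi : 'S_Cc) \sum_x cmod2 (vf pi x) = K * ((1 + c) * na - c * cm).
  apply: complexI; rewrite HS cCe.
  by rewrite /K !(rmorphM, rmorphB, rmorphD, rmorph1).
have Sn0 : (#|[set: 'S_Cc]|%:R : R) != 0.
  by rewrite pnatr_eq0 cardsT card_Sn -lt0n fact_gt0.
have N0 : (N%:R : R) != 0 by rewrite pnatr_eq0 -lt0n.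
have Een : En = (1 + c) * na - c * cm.
  rewrite /En /Eperm.
  under eq_bigr => pi _ do rewrite L6.
  rewrite -mulr_sumr HSr /K; field.
  by rewrite Sn0 N0.
have cpos : 0 < c.
  by rewrite /c invr_gt0 subr_gt0 ltr1n.
have cm0 : 0 <= cm by apply: cmod2_ge0.
have hcs : cm <= k%:R * na by apply: CSc.
have h1' : 0 <= c * (k%:R * na - cm) by rewrite mulr_ge0 ?subr_ge0 // ltW.
have h2' : 0 <= c * cm by rewrite mulr_ge0 // ltW.
rewrite Een -/c div1r -/c; split.
  rewrite mulrBl mul1r -mulrA.
  have -> : (k%:R - 1) * (c * na) = c * (k%:R * na) - c * na by ring.
  rewrite mulrDl mul1r; rewrite mulrBr in h1'.
  lra.
rewrite mulrDl mul1r.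
lra.
Qed.
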